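(* For all closed terms $t_0,t_1$ of $\lambda_S$, if $t_0 \approx_{\emptyset} t_1$ then $t_0 \equiv t_1$.
   Context: Terms of $\lambda_S$: $t ::= x \mid \lambda x.t \mid t\,t \mid \mathcal{S}k.t \mid \langle t\rangle$ (shift $\mathcal{S}k.t$ binds $k$, reset $\langle t\rangle$), taken up to $\alpha$-conversion; $\mathrm{fv}(t)$ is the set of free variables and $t$ is closed if $\mathrm{fv}(t)=\emptyset$. Values: $v ::= \lambda x.t$. Pure contexts $E ::= \Box \mid v\,E \mid E\,t$; evaluation contexts $F ::= \Box \mid v\,F \mid F\,t \mid \langle F\rangle$; contexts $C ::= \Box \mid \lambda x.C \mid t\,C \mid C\,t \mid \mathcal{S}k.C \mid \langle C\rangle$ (filling may capture variables). Reduction: $F[(\lambda x.t)\,v] \to F[t\{v/x\}]$; $F[\langle E[\mathcal{S}k.t]\rangle] \to F[\langle t\{\lambda x.\langle E[x]\rangle/k\}\rangle]$ ($x\notin\mathrm{fv}(E)$); $F[\langle v\rangle]\to F[v]$. $\to^*$ is the reflexive-transitive closure; $t\Downarrow t'$ means $t\to^* t'$ and $t'$ is irreducible. A term is stuck if it is not a value and is irreducible; a normal form is a value or a stuck term. Closures: for a relation $R$ on closed terms, $\widetilde R$ is the smallest relation on terms containing $R$, all pairs $(x,x)$ for variables $x$, and closed under the constructors ($t_0\widetilde R t_1$ implies $\lambda x.t_0\widetilde R\lambda x.t_1$, $\mathcal S k.t_0\widetilde R\mathcal Sk.t_1$, $\langle t_0\rangle\widetilde R\langle t_1\rangle$; $t_0\widetilde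 R t_1$ and $t_0'\widetilde R t_1'$ imply $t_0t_0'\widetilde R t_1t_1'$), restricted to closed terms. $\widehat R$ is the smallest relation on closed evaluation contexts with $\Box\widehat R\Box$; $v_0F_0\widehat R v_1F_1$ if $F_0\widehat R F_1$, $v_0\widetilde R v_1$; $F_0t_0\widehat R F_1t_1$ if $F_0\widehat RF_1$, $t_0\widetilde R t_1$; $\langle F_0\rangle\widehat R\langle F_1\rangle$ if $F_0\widehat RF_1$ (in particular it relates pure contexts). Environmental bisimilarity: an environment $\mathcal E$ is a relation on closed normal forms relating values only to values and stuck terms only to stuck terms. An environmental relation $\mathcal X$ is a set of environments and of triples $(\mathcal E,t_0,t_1)$ with $t_0,t_1$ closed; write $t_0\,\mathcal X_{\mathcal E}\,t_1$. $\mathcal X$ is an environmental bisimulation if (1) whenever $t_0\,\mathcal X_{\mathcal E}\,t_1$: (a) if $t_0\to t_0'$ then $t_1\to^* t_1'$ with $t_0'\,\mathcal X_{\mathcal E}\,t_1'$; (b) if $t_0$ is a value $v_0$ then $t_1\to^* v_1$ for a value $v_1$ and $\mathcal E\cup\{(v_0,v_1)\}\in\mathcal X$; (c) if $t_0$ is stuck then $t_1\to^* t_1'$ with $t_1'$ stuck and $\mathcal E\cup\{(t_0,t_1')\}\in\mathcal X$; (d) the symmetric conditions with $t_0,t_1$ swapped; (2) whenever $\mathcal E\in\mathcal X$: (a) if $(\lambda x.t_0)\,\mathcal E\,(\lambda x.t_1)$ and $v_0\widetilde{\mathcal E}v_1$ then $t_0\{v_0/x\}\,\mathcal X_{\mathcal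 E}\,t_1\{v_1/x\}$; (b) if $E_0[\mathcal Sk.t_0]\,\mathcal E\,E_1[\mathcal Sk.t_1]$ and $E_0'\widehat{\mathcal E}E_1'$ (pure contexts), then $\langle t_0\{\lambda x.\langle E_0'[E_0[x]]\rangle/k\}\rangle\,\mathcal X_{\mathcal E}\,\langle t_1\{\lambda x.\langle E_1'[E_1[x]]\rangle/k\}\rangle$ for fresh $x$. $\approx$ is the largest environmental bisimulation; $t_0\approx_{\mathcal E}t_1$ means $(\mathcal E,t_0,t_1)\in\approx$. Contextual equivalence: $t_0\equiv t_1$ iff for every context $C$ with $C[t_0],C[t_1]$ closed, $C[t_0]\Downarrow$ a value iff $C[t_1]\Downarrow$ a value, and $C[t_0]\Downarrow$ a stuck term iff $C[t_1]\Downarrow$ a stuck term. *)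

(* Defs.v *)
(* Terms of lambda_S with de Bruijn indices (terms up to alpha). *)
From Stdlib Require Import Arith List.

Inductive term : Type :=
| Var (n : nat)
| Lam (t : term)
| App (t u : term)
| Shift (t : term)        (* S k. t, binds index 0 (= k) in t *)
| Reset (t : term).

Fixpoint closed_at (k : nat) (t : term) : Prop :=
  match t with
  | Var n => n < k
  | Lam t => closed_at (S k) t
  | App t u => closed_at k t /\ closed_at k u
  | Shift t => closed_at (S k) t
  | Reset t => closed_at k t
  end.

Definition closed (t : term) : Prop := closed_at 0 t.

Definition is_val (t : term) : Prop := exists b, t = Lam b.

Fixpoint lift (c : nat) (t : term) : term :=
  match t with
  | Var n => if n <? c then Var n else Var (S n)
  | Lam t => Lam (lift (S c) t)
  | App t u => App (lift c t) (lift c u)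
  | Shift t => Shift (lift (S c) t)
  | Reset t => Reset (lift c t)
  end.

Fixpoint subst (k : nat) (s : term) (t : term) : term :=
  match t with
  | Var n => if n =? k then s else if k <? n then Var (pred n) else Var n
  | Lam t => Lam (subst (S k) (lift 0 s) t)
  | App t u => App (subst k s t) (subst k s u)
  | Shift t => Shift (subst (S k) (lift 0 s) t)
  | Reset t => Reset (subst k s t)
  end.

Definition subst0 (v t : term) : term := subst 0 v t.

(* Evaluation contexts F ::= [] | v F | F t | <F>  (pure when no reset) *)
Inductive ectx : Type :=
| Hole
| ArgCtx (v : term) (F : ectx)
| FunCtx (F : ectx) (t : term)
| ResetCtx (F : ectx).

Fixpoint plug (F : ectx) (t : term) : term :=
  match F with
  | Hole => t
  | ArgCtx v F => App v (plug F t)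
  | FunCtx F u => App (plug F t) u
  | ResetCtx F => Reset (plug F t)
  end.

Fixpoint lift_ectx (c : nat) (F : ectx) : ectx :=
  match F with
  | Hole => Hole
  | ArgCtx v F => ArgCtx (lift c v) (lift_ectx c F)
  | FunCtx F u => FunCtx (lift_ectx c F) (lift c u)
  | ResetCtx F => ResetCtx (lift_ectx c F)
  end.

Fixpoint eval_ctx (F : ectx) : Prop :=
  match F with
  | Hole => True
  | ArgCtx v F => is_val v /\ eval_ctx F
  | FunCtx F _ => eval_ctx F
  | ResetCtx F => eval_ctx F
  end.

Fixpoint pure_ctx (F : ectx) : Prop :=
  match F with
  | Hole => True
  | ArgCtx v F => is_val v /\ pure_ctx F
  | FunCtx F _ => pure_ctx F
  | ResetCtx _ => False
  end.

Fixpoint closed_ectx (F : ectx) : Prop :=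
  match F with
  | Hole => True
  | ArgCtx v F => closed v /\ closed_ectx F
  | FunCtx F u => closed_ectx F /\ closed u
  | ResetCtx F => closed_ectx F
  end.

(* The continuation \x.<E[x]> captured by shift *)
Definition capture (E : ectx) : term := Lam (Reset (plug (lift_ectx 0 E) (Var 0))).

Inductive step : term -> term -> Prop :=
| step_beta : forall F t v, eval_ctx F -> is_val v ->
    step (plug F (App (Lam t) v)) (plug F (subst0 v t))
| step_shift : forall F E t, eval_ctx F -> pure_ctx E ->
    step (plug F (Reset (plug E (Shift t))))
         (plug F (Reset (subst0 (capture E) t)))
| step_reset : forall F v, eval_ctx F -> is_val v ->
    step (plug F (Reset v)) (plug F v).

Inductive star : term -> term -> Prop :=
| star_refl : forall t, star t t
| star_step : forall t t' t'', step t t' -> star t' t'' -> star t t''.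

Definition irreducible (t : term) : Prop := forall t', ~ step t t'.
Definition stuck (t : term) : Prop := ~ is_val t /\ irreducible t.
Definition normal_form (t : term) : Prop := is_val t \/ stuck t.
Definition evals_to (t t' : term) : Prop := star t t' /\ irreducible t'.

(* General (one-hole) contexts; filling may capture variables *)
Inductive ctx : Type :=
| CHole
| CLam (C : ctx)
| CAppL (C : ctx) (t : term)
| CAppR (t : term) (C : ctx)
| CShift (C : ctx)
| CReset (C : ctx).

Fixpoint cfill (C : ctx) (t : term) : term :=
  match C with
  | CHole => t
  | CLam C => Lam (cfill C t)
  | CAppL C u => App (cfill C t) u
  | CAppR u C => App u (cfill C t)
  | CShift C => Shift (cfill C t)
  | CReset C => Reset (cfill C t)
  end.

Definition rel := term -> term -> Prop.

Inductive tclos (R : rel) : rel :=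
| tc_base : forall t0 t1, R t0 t1 -> tclos R t0 t1
| tc_var : forall n, tclos R (Var n) (Var n)
| tc_lam : forall t0 t1, tclos R t0 t1 -> tclos R (Lam t0) (Lam t1)
| tc_shift : forall t0 t1, tclos R t0 t1 -> tclos R (Shift t0) (Shift t1)
| tc_reset : forall t0 t1, tclos R t0 t1 -> tclos R (Reset t0) (Reset t1)
| tc_app : forall t0 t1 u0 u1, tclos R t0 t1 -> tclos R u0 u1 ->
    tclos R (App t0 u0) (App t1 u1).

Definition tilde (R : rel) : rel :=
  fun t0 t1 => tclos R t0 t1 /\ closed t0 /\ closed t1.

Inductive hat (R : rel) : ectx -> ectx -> Prop :=
| hat_hole : hat R Hole Hole
| hat_arg : forall v0 v1 F0 F1, hat R F0 F1 -> is_val v0 -> is_val v1 ->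
    tilde R v0 v1 -> hat R (ArgCtx v0 F0) (ArgCtx v1 F1)
| hat_fun : forall F0 F1 t0 t1, hat R F0 F1 -> tilde R t0 t1 ->
    hat R (FunCtx F0 t0) (FunCtx F1 t1)
| hat_reset : forall F0 F1, hat R F0 F1 -> hat R (ResetCtx F0) (ResetCtx F1).

Definition environment (E : rel) : Prop :=
  forall a b, E a b -> closed a /\ closed b /\
    ((is_val a /\ is_val b) \/ (stuck a /\ stuck b)).

Definition rel_add (E : rel) (a b : term) : rel :=
  fun x y => E x y \/ (x = a /\ y = b).

Definition empty_env : rel := fun _ _ => False.

Record envrel : Type := EnvRel {
  X_env : rel -> Prop;
  X_trip : rel -> term -> term -> Prop
}.

Definition is_envrel (X : envrel) : Prop :=
  (forall E, X_env X E -> environment E) /\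
  (forall E t0 t1, X_trip X E t0 t1 -> environment E /\ closed t0 /\ closed t1).

Definition env_bisim (X : envrel) : Prop :=
  (forall E t0 t1, X_trip X E t0 t1 ->
     (forall t0', step t0 t0' -> exists t1', star t1 t1' /\ X_trip X E t0' t1') /\
     (is_val t0 -> exists v1, star t1 v1 /\ is_val v1 /\ X_env X (rel_add E t0 v1)) /\
     (stuck t0 -> exists t1', star t1 t1' /\ stuck t1' /\ X_env X (rel_add E t0 t1')) /\
     (forall t1', step t1 t1' -> exists t0', star t0 t0' /\ X_trip X E t0' t1') /\
     (is_val t1 -> exists v0, star t0 v0 /\ is_val v0 /\ X_env X (rel_add E v0 t1)) /\
     (stuck t1 -> exists t0', star t0 t0' /\ stuck t0' /\ X_env X (rel_add E t0' t1)))
  /\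
  (forall E, X_env X E ->
     (forall t0 t1 v0 v1, E (Lam t0) (Lam t1) -> is_val v0 -> is_val v1 ->
        tilde E v0 v1 -> X_trip X E (subst0 v0 t0) (subst0 v1 t1)) /\
     (forall E0 E1 t0 t1 E0' E1', pure_ctx E0 -> pure_ctx E1 ->
        E (plug E0 (Shift t0)) (plug E1 (Shift t1)) ->
        pure_ctx E0' -> pure_ctx E1' -> hat E E0' E1' ->
        X_trip X E
          (Reset (subst0 (Lam (Reset (plug (lift_ectx 0 E0')
                                         (plug (lift_ectx 0 E0) (Var 0))))) t0))
          (Reset (subst0 (Lam (Reset (plug (lift_ectx 0 E1')
                                         (plug (lift_ectx 0 E1) (Var 0))))) t1)))).

(* Environmental bisimilarity: the largest environmental bisimulation,
   i.e. the union of all of them. *)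
Definition bisimilar (E : rel) (t0 t1 : term) : Prop :=
  exists X, is_envrel X /\ env_bisim X /\ X_trip X E t0 t1.

Definition ctx_equiv (t0 t1 : term) : Prop :=
  forall C, closed (cfill C t0) -> closed (cfill C t1) ->
    ((exists v, evals_to (cfill C t0) v /\ is_val v) <->
     (exists v, evals_to (cfill C t1) v /\ is_val v)) /\
    ((exists s, evals_to (cfill C t0) s /\ stuck s) <->
     (exists s, evals_to (cfill C t1) s /\ stuck s)).

(* Main.v *)
Require Import Defs.
From Stdlib Require Import Arith List Lia.


Lemma closed_at_mono : forall t k k', closed_at k t -> k <= k' -> closed_at k' t.
Proof. induction t; simpl; intros; try tauto; try lia.
  - eapply IHt; eauto; lia.
  - destruct H; split; eauto.
  - eapply IHt; eauto; lia.
  - eauto.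
Qed.

Lemma closed_any : forall t k, closed t -> closed_at k t.
Proof. intros; eapply closed_at_mono; eauto; lia. Qed.

Lemma lift_closed : forall t c, closed_at c t -> lift c t = t.
Proof. induction t; simpl; intros.
  - destruct (Nat.ltb_spec n c); [reflexivity|lia].
  - rewrite IHt; auto.
  - destruct H; rewrite IHt1, IHt2; auto.
  - rewrite IHt; auto.
  - rewrite IHt; auto.
Qed.

Lemma subst_closed : forall t k s, closed_at k t -> subst k s t = t.
Proof. induction t; simpl; intros.
  - destruct (Nat.eqb_spec n k); [lia|]. destruct (Nat.ltb_spec k n); [lia|reflexivity].
  - rewrite IHt; auto.
  - destruct H; rewrite IHt1, IHt2; auto.
  - rewrite IHt; auto.
  - rewrite IHt; auto.
Qed.

Lemma closed_lift : forall t k c, closed_at k t -> closed_at (S k) (lift c t).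
Proof. induction t; simpl; intros.
  - destruct (n <? c); simpl; lia.
  - apply IHt; auto.
  - destruct H; split; auto.
  - apply IHt; auto.
  - apply IHt; auto.
Qed.

Lemma closed_subst : forall t k s, closed_at (S k) t -> closed_at k s -> closed_at k (subst k s t).
Proof. induction t; simpl; intros.
  - destruct (Nat.eqb_spec n k); auto. destruct (Nat.ltb_spec k n); simpl; lia.
  - apply IHt; auto. apply closed_lift; auto.
  - destruct H; split; auto.
  - apply IHt; auto. apply closed_lift; auto.
  - apply IHt; auto.
Qed.

Fixpoint cl_ctx (k : nat) (F : ectx) : Prop :=
  match F with
  | Hole => True
  | ArgCtx v F => closed_at k v /\ cl_ctx k F
  | FunCtx F u => cl_ctx k F /\ closed_at k u
  | ResetCtx F => cl_ctx k F
  end.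

Lemma closed_plug : forall F k x, closed_at k (plug F x) <-> cl_ctx k F /\ closed_at k x.
Proof. induction F; simpl; intros; try rewrite IHF; tauto. Qed.

Lemma cl_ctx_lift : forall F k c, cl_ctx k F -> cl_ctx (S k) (lift_ectx c F).
Proof. induction F; simpl; intros; try tauto.
  - destruct H; split; auto using closed_lift.
  - destruct H; split; auto using closed_lift.
  - auto.
Qed.

Lemma capture_closed : forall E, cl_ctx 0 E -> closed (capture E).
Proof. intros. unfold capture, closed. simpl. apply closed_plug. split.
  apply cl_ctx_lift; auto. simpl; lia. Qed.

Lemma step_closed : forall a a', step a a' -> closed a -> closed a'.
Proof. intros a a' H. destruct H; unfold closed; intros Hc; apply closed_plug in Hc;
  apply closed_plug; destruct Hc as [HF Hr]; split; auto; simpl in *.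
  - destruct Hr. unfold subst0. apply closed_subst; auto.
  - apply closed_plug in Hr. destruct Hr. simpl in *. unfold subst0.
    apply closed_subst; auto. apply capture_closed; auto.
Qed.


Definition Bcl (B : rel) := forall p q, B p q -> closed p /\ closed q.

Ltac tcs := first [apply tc_var|apply tc_lam|apply tc_shift|apply tc_reset|apply tc_app].

Lemma tclos_refl : forall B t, tclos B t t.
Proof. intros B t; induction t; [apply tc_var|apply tc_lam|apply tc_app|apply tc_shift|apply tc_reset]; auto. Qed.

Lemma tclos_lift : forall B, Bcl B -> forall t t', tclos B t t' -> forall c, tclos B (lift c t) (lift c t').
Proof. intros B HB t t' H; induction H; simpl; intros.
  - destruct (HB _ _ H). rewrite !lift_closed by (apply closed_any; auto). constructor; auto.
  - apply tclos_refl.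
  - tcs; auto.
  - tcs; auto.
  - tcs; auto.
  - tcs; auto.
Qed.

Lemma tclos_subst : forall B, Bcl B -> forall t t', tclos B t t' ->
  forall k s s', tclos B s s' -> tclos B (subst k s t) (subst k s' t').
Proof. intros B HB t t' H; induction H; simpl; intros.
  - destruct (HB _ _ H). rewrite !subst_closed by (apply closed_any; auto). constructor; auto.
  - destruct (n =? k); auto. destruct (k <? n); tcs.
  - tcs; apply IHtclos; apply tclos_lift; auto.
  - tcs; apply IHtclos; apply tclos_lift; auto.
  - tcs; auto.
  - tcs; auto.
Qed.

Lemma tclos_closed : forall B, Bcl B -> forall t t', tclos B t t' ->
  forall k, (closed_at k t <-> closed_at k t').
Proof. intros B HB t t' H; induction H; simpl; intros.
  - destruct (HB _ _ H). split; intros; apply closed_any; auto.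
  - tauto.
  - auto.
  - auto.
  - auto.
  - rewrite IHtclos1, IHtclos2. tauto.
Qed.

Inductive crel (B : rel) : ectx -> ectx -> Prop :=
| cr_hole : crel B Hole Hole
| cr_arg : forall v v' F F', tclos B v v' -> crel B F F' -> crel B (ArgCtx v F) (ArgCtx v' F')
| cr_fun : forall F F' u u', crel B F F' -> tclos B u u' -> crel B (FunCtx F u) (FunCtx F' u')
| cr_reset : forall F F', crel B F F' -> crel B (ResetCtx F) (ResetCtx F').

Lemma crel_plug : forall B F F', crel B F F' -> forall x x', tclos B x x' -> tclos B (plug F x) (plug F' x').
Proof. intros B F F' H; induction H; simpl; intros; auto; tcs; auto. Qed.

Lemma crel_refl : forall B F, crel B F F.
Proof. induction F; [apply cr_hole|apply cr_arg|apply cr_fun|apply cr_reset]; auto using tclos_refl. Qed.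

Lemma crel_lift : forall B, Bcl B -> forall F F', crel B F F' -> forall c, crel B (lift_ectx c F) (lift_ectx c F').
Proof. intros B HB F F' H; induction H; simpl; intros; constructor; auto using tclos_lift. Qed.

Lemma tclos_mono : forall (B B' : rel), (forall p q, B p q -> B' p q) -> forall t t', tclos B t t' -> tclos B' t t'.
Proof. intros B B' HB t t' H; induction H; [apply tc_base|tcs..]; auto. Qed.

Lemma crel_mono : forall (B B' : rel), (forall p q, B p q -> B' p q) -> forall F F', crel B F F' -> crel B' F F'.
Proof. intros B B' HB F F' H; induction H; constructor; eauto using tclos_mono. Qed.

Inductive tcn (B : rel) : nat -> term -> term -> Prop :=
| tn_base : forall p q, B p q -> tcn B 1 p q
| tn_var : forall n, tcn B 0 (Var n) (Var n)
| tn_lam : forall k t0 t1, tcn B k t0 t1 -> tcn B k (Lam t0) (Lam t1)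
| tn_shift : forall k t0 t1, tcn B k t0 t1 -> tcn B k (Shift t0) (Shift t1)
| tn_reset : forall k t0 t1, tcn B k t0 t1 -> tcn B k (Reset t0) (Reset t1)
| tn_app : forall k1 k2 t0 t1 u0 u1, tcn B k1 t0 t1 -> tcn B k2 u0 u1 ->
    tcn B (k1 + k2) (App t0 u0) (App t1 u1).

Lemma tcn_tclos : forall B k t t', tcn B k t t' -> tclos B t t'.
Proof. intros B k t t' H; induction H; [apply tc_base|tcs..]; auto. Qed.

Lemma tclos_tcn : forall B t t', tclos B t t' -> exists k, tcn B k t t'.
Proof. intros B t t' H; induction H; try destruct IHtclos as [k Hk];
  [eexists; apply tn_base; eauto|eexists; apply tn_var|eexists; apply tn_lam; eauto|eexists; apply tn_shift; eauto|eexists; apply tn_reset; eauto|].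
  destruct IHtclos1 as [k1 H1], IHtclos2 as [k2 H2]. eexists; apply tn_app; eauto.
Qed.

Lemma tcn_refl : forall B t, tcn B 0 t t.
Proof. intros B t; induction t; [apply tn_var|apply tn_lam|change 0 with (0 + 0); apply tn_app|apply tn_shift|apply tn_reset]; auto. Qed.

Inductive cn (B : rel) : nat -> ectx -> ectx -> Prop :=
| cn_hole : cn B 0 Hole Hole
| cn_arg : forall k1 k2 v v' F F', tcn B k1 v v' -> cn B k2 F F' -> cn B (k1 + k2) (ArgCtx v F) (ArgCtx v' F')
| cn_fun : forall k1 k2 F F' u u', cn B k1 F F' -> tcn B k2 u u' -> cn B (k1 + k2) (FunCtx F u) (FunCtx F' u')
| cn_reset : forall k F F', cn B k F F' -> cn B k (ResetCtx F) (ResetCtx F').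

Lemma cn_plug : forall B k F F', cn B k F F' -> forall j x x', tcn B j x x' -> tcn B (k + j) (plug F x) (plug F' x').
Proof. intros B k F F' H; induction H; simpl; intros; auto.
  - replace (k1 + k2 + j) with (k1 + (k2 + j)) by lia. apply tn_app; auto.
  - replace (k1 + k2 + j) with ((k1 + j) + k2) by lia. apply tn_app; auto.
  - apply tn_reset; auto.
Qed.

Lemma cn_crel : forall B k F F', cn B k F F' -> crel B F F'.
Proof. intros B k F F' H; induction H; constructor; eauto using tcn_tclos. Qed.


Fixpoint compose (A B : ectx) : ectx :=
  match A with
  | Hole => B
  | ArgCtx v A => ArgCtx v (compose A B)
  | FunCtx A u => FunCtx (compose A B) u
  | ResetCtx A => ResetCtx (compose A B)
  end.

Lemma plug_compose : forall A B x, plug (compose A B) x = plug A (plug B x).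
Proof. induction A; simpl; intros; try rewrite IHA; auto. Qed.

Lemma eval_compose : forall A B, eval_ctx A -> eval_ctx B -> eval_ctx (compose A B).
Proof. induction A; simpl; intros; try (destruct H as [? ?]; split); auto. Qed.

Lemma pure_compose : forall A B, pure_ctx A -> pure_ctx B -> pure_ctx (compose A B).
Proof. induction A; simpl; intros; try (destruct H as [? ?]; split); auto. Qed.

Lemma pure_eval : forall E, pure_ctx E -> eval_ctx E.
Proof. induction E; simpl; intros; tauto. Qed.

Lemma lift_compose : forall A B c, lift_ectx c (compose A B) = compose (lift_ectx c A) (lift_ectx c B).
Proof. induction A; simpl; intros; try rewrite IHA; auto. Qed.

Lemma capture_compose : forall A B,
  capture (compose A B) = Lam (Reset (plug (lift_ectx 0 A) (plug (lift_ectx 0 B) (Var 0)))).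
Proof. intros. unfold capture. rewrite lift_compose, plug_compose. reflexivity. Qed.

Lemma cl_ctx_compose : forall A B k, cl_ctx k (compose A B) <-> cl_ctx k A /\ cl_ctx k B.
Proof. induction A; simpl; intros; try rewrite IHA; tauto. Qed.

Inductive contr : term -> term -> Prop :=
| c_beta : forall t v, is_val v -> contr (App (Lam t) v) (subst0 v t)
| c_shift : forall E t, pure_ctx E -> contr (Reset (plug E (Shift t))) (Reset (subst0 (capture E) t))
| c_reset : forall v, is_val v -> contr (Reset v) v.

Lemma step_inv : forall a a', step a a' <-> exists F r r', eval_ctx F /\ contr r r' /\ a = plug F r /\ a' = plug F r'.
Proof. split.
  - intros H; destruct H; do 3 eexists; repeat split; eauto; constructor; auto.
  - intros (F & r & r' & HF & Hc & -> & ->). destruct Hc; constructor; auto.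
Qed.

Lemma step_ctx : forall F a a', eval_ctx F -> step a a' -> step (plug F a) (plug F a').
Proof. intros F a a' HF H. apply step_inv in H. destruct H as (G & r & r' & HG & Hc & -> & ->).
  apply step_inv. exists (compose F G), r, r'. rewrite !plug_compose. repeat split; auto using eval_compose. Qed.

Lemma star_trans : forall a b c, star a b -> star b c -> star a c.
Proof. intros a b c H; induction H; intros; auto. econstructor; eauto. Qed.

Lemma star_ctx : forall F a a', eval_ctx F -> star a a' -> star (plug F a) (plug F a').
Proof. intros F a a' HF H; induction H. constructor. econstructor; eauto using step_ctx. Qed.

Lemma star1 : forall a b, step a b -> star a b.
Proof. intros; econstructor; eauto; constructor. Qed.

Lemma pure_shift_not_val : forall E s, pure_ctx E -> ~ is_val (plug E (Shift s)).
Proof. destruct E; simpl; intros s HE [b Hb]; try discriminate; tauto. Qed.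

Lemma contr_not_val : forall r r', contr r r' -> ~ is_val r.
Proof. intros r r' H [b Hb]; destruct H; discriminate. Qed.

Lemma plug_contr_not_val : forall F r r', contr r r' -> ~ is_val (plug F r).
Proof. destruct F; simpl; intros r r' H [b Hb]; try discriminate. eapply contr_not_val; eauto. exists b; auto. Qed.

Lemma pure_not_reset : forall E s u, pure_ctx E -> plug E (Shift s) <> Reset u.
Proof. destruct E; simpl; intros; try discriminate; tauto. Qed.

Lemma pure_shift_neq : forall F r r' E s, eval_ctx F -> contr r r' -> pure_ctx E -> plug F r <> plug E (Shift s).
Proof. induction F; simpl; intros r r' E s HF Hc HE Heq.
  - destruct Hc.
    + destruct E; simpl in *; try discriminate; try tauto.
      * injection Heq as H1 H2. destruct HE as [_ HE]. apply (pure_shift_not_val E s HE). rewrite <- H2; auto.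
      * injection Heq as H1 H2. apply (pure_shift_not_val E s HE). rewrite <- H1. eexists; eauto.
    + symmetry in Heq. eapply pure_not_reset; eauto.
    + symmetry in Heq. eapply pure_not_reset; eauto.
  - destruct HF as [Hv HF]. destruct E; simpl in *; try discriminate; try tauto.
    + injection Heq as H1 H2. destruct HE as [_ HE]. eapply IHF; eauto.
    + injection Heq as H1 H2. apply (pure_shift_not_val E s HE). rewrite <- H1; auto.
  - destruct E; simpl in *; try discriminate; try tauto.
    + injection Heq as H1 H2. destruct HE as [HE1 HE]. eapply plug_contr_not_val; eauto. rewrite H1; auto.
    + injection Heq as H1 H2. eapply IHF; eauto.
  - symmetry in Heq. eapply pure_not_reset; eauto.
Qed.

Lemma pure_shift_inj : forall E E' s s', pure_ctx E -> pure_ctx E' ->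
  plug E (Shift s) = plug E' (Shift s') -> E = E' /\ s = s'.
Proof. induction E; destruct E'; simpl; intros s s' HE HE' Heq; try discriminate; try tauto.
  - injection Heq; auto.
  - injection Heq as <- H. destruct HE, HE'. destruct (IHE E' s s'); auto. subst; auto.
  - injection Heq as H1 H2. exfalso. destruct HE as [Hv _]. apply (pure_shift_not_val E' s' HE'). rewrite <- H1; auto.
  - injection Heq as H1 H2. exfalso. destruct HE' as [Hv _]. apply (pure_shift_not_val E s HE). rewrite H1; auto.
  - injection Heq as H <-. destruct (IHE E' s s'); auto. subst; auto.
Qed.

Lemma unique_decomp : forall F1 F2 r1 r1' r2 r2', eval_ctx F1 -> eval_ctx F2 -> contr r1 r1' -> contr r2 r2' ->
  plug F1 r1 = plug F2 r2 -> F1 = F2 /\ r1 = r2.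
Proof. induction F1; destruct F2; simpl; intros r1 r1' r2 r2' H1 H2 C1 C2 Heq; try discriminate.
  - split; auto.
  - exfalso. destruct C1; try discriminate. injection Heq as H3 H4. destruct H2 as [_ H2].
    apply (plug_contr_not_val F2 r2 r2' C2). rewrite <- H4; auto.
  - exfalso. destruct C1; try discriminate. injection Heq as H3 H4.
    apply (plug_contr_not_val F2 r2 r2' C2). rewrite <- H3. eexists; eauto.
  - exfalso. destruct C1; try discriminate; injection Heq as HH.
    + eapply pure_shift_neq; eauto.
    + apply (plug_contr_not_val F2 r2 r2' C2). rewrite <- HH; auto.
  - exfalso. destruct C2; try discriminate. injection Heq as H3 H4. destruct H1 as [_ H1].
    apply (plug_contr_not_val F1 r1 r1' C1). rewrite H4; auto.
  - injection Heq as <- HH. destruct H1 as [_ H1], H2 as [_ H2]. destruct (IHF1 F2 r1 r1' r2 r2'); auto. subst; auto.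
  - exfalso. injection Heq as H H'. destruct H1 as [Hv _]. apply (plug_contr_not_val F2 r2 r2' C2). rewrite <- H; auto.
  - exfalso. destruct C2; try discriminate. injection Heq as H3 H4.
    apply (plug_contr_not_val F1 r1 r1' C1). rewrite H3. eexists; eauto.
  - exfalso. injection Heq as H H'. destruct H2 as [Hv _]. apply (plug_contr_not_val F1 r1 r1' C1). rewrite H; auto.
  - injection Heq as H <-. destruct (IHF1 F2 r1 r1' r2 r2'); auto. subst; auto.
  - exfalso. destruct C2; try discriminate; injection Heq as HH.
    + symmetry in HH. eapply pure_shift_neq; eauto.
    + apply (plug_contr_not_val F1 r1 r1' C1). rewrite HH; auto.
  - injection Heq as HH. destruct (IHF1 F2 r1 r1' r2 r2'); auto. subst; auto.
Qed.

Lemma contr_det : forall r r1 r2, contr r r1 -> contr r r2 -> r1 = r2.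
Proof. intros r r1 r2 H1 H2; destruct H1; inversion H2; subst; auto.
  - match goal with H0 : plug ?E0 (Shift ?t0) = plug ?E (Shift ?t) |- _ =>
      destruct (pure_shift_inj E0 E t0 t) as [-> ->]; auto end.
  - exfalso; eapply pure_shift_not_val; eauto.
  - exfalso; eapply pure_shift_not_val; eauto.
Qed.

Lemma step_det : forall a a1 a2, step a a1 -> step a a2 -> a1 = a2.
Proof. intros a a1 a2 H1 H2. apply step_inv in H1, H2.
  destruct H1 as (F1 & r1 & r1' & HF1 & C1 & -> & ->).
  destruct H2 as (F2 & r2 & r2' & HF2 & C2 & Heq & ->).
  destruct (unique_decomp F1 F2 r1 r1' r2 r2'); auto. subst. f_equal. eapply contr_det; eauto. Qed.

Lemma val_irred : forall v, is_val v -> irreducible v.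
Proof. intros v Hv v' H. apply step_inv in H. destruct H as (F & r & r' & HF & C & -> & _).
  eapply plug_contr_not_val; eauto. Qed.

Lemma shift_irred : forall E s, pure_ctx E -> irreducible (plug E (Shift s)).
Proof. intros E s HE v' H. apply step_inv in H. destruct H as (F & r & r' & HF & C & Heq & _).
  eapply pure_shift_neq; eauto. Qed.

Lemma shape_stuck : forall E s, pure_ctx E -> stuck (plug E (Shift s)).
Proof. intros. split. apply pure_shift_not_val; auto. apply shift_irred; auto. Qed.

Lemma progress : forall t, closed t -> is_val t \/ (exists t', step t t') \/ (exists E s, pure_ctx E /\ t = plug E (Shift s)).
Proof. induction t; unfold closed; simpl; intros Hc.
  - lia.
  - left; eexists; eauto.
  - destruct Hc as [Hc1 Hc2]. destruct (IHt1 Hc1) as [Hv1 | [[t1' H1] | (E & s & HE & ->)]].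
    + destruct (IHt2 Hc2) as [Hv2 | [[t2' H2] | (E & s & HE & ->)]].
      * destruct Hv1 as [b ->]. right; left. eexists. apply (step_beta Hole); simpl; auto.
      * right; left. eexists. apply (step_ctx (ArgCtx t1 Hole)) in H2; simpl; eauto.
      * right; right. exists (ArgCtx t1 E), s; simpl; auto.
    + right; left. eexists. apply (step_ctx (FunCtx Hole t2)) in H1; simpl; eauto.
    + right; right. exists (FunCtx E t2), s; simpl; auto.
  - right; right. exists Hole, t; simpl; auto.
  - destruct (IHt Hc) as [Hv1 | [[t1' H1] | (E & s & HE & ->)]].
    + right; left. eexists. apply (step_reset Hole); simpl; auto.
    + right; left. eexists. apply (step_ctx (ResetCtx Hole)) in H1; simpl; eauto.
    + right; left. eexists. apply (step_shift Hole); simpl; auto.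
Qed.

Lemma stuck_shape : forall t, closed t -> stuck t -> exists E s, pure_ctx E /\ t = plug E (Shift s).
Proof. intros t Hc [Hv Hi]. destruct (progress t Hc) as [H | [[t' H] | H]]; auto.
  contradiction. exfalso; eapply Hi; eauto. Qed.

Inductive starn : nat -> term -> term -> Prop :=
| sn_refl : forall t, starn 0 t t
| sn_step : forall n t t' t'', step t t' -> starn n t' t'' -> starn (S n) t t''.

Lemma star_starn : forall a b, star a b -> exists n, starn n a b.
Proof. intros a b H; induction H. exists 0; constructor. destruct IHstar as [n Hn]. exists (S n); econstructor; eauto. Qed.

Lemma starn_star : forall n a b, starn n a b -> star a b.
Proof. intros n a b H; induction H; econstructor; eauto. Qed.

Lemma starn_det : forall n a a' t, step a a' -> starn n a t -> irreducible t -> exists m, n = S m /\ starn m a' t.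
Proof. intros n a a' t Hs H Hi. inversion H; subst.
  - exfalso; eapply Hi; eauto.
  - exists n0; split; auto. rewrite (step_det _ _ _ Hs H0); auto. Qed.

Lemma star_det : forall a a' t, step a a' -> star a t -> irreducible t -> star a' t.
Proof. intros. destruct (star_starn _ _ H0) as [n Hn]. destruct (starn_det _ _ _ _ H Hn H1) as (m & _ & Hm).
  eapply starn_star; eauto. Qed.

Lemma star_det_gen : forall a b t, star a b -> star a t -> irreducible t -> star b t.
Proof. intros a b t H; induction H; intros; auto. apply IHstar; auto. eapply star_det; eauto. Qed.

Definition same_nf (b t : term) := exists t', star b t' /\ irreducible t' /\ (is_val t <-> is_val t').

Lemma same_nf_star : forall b b' t, star b b' -> same_nf b' t -> same_nf b t.
Proof. intros b b' t H (t' & H1 & H2 & H3). exists t'; split; eauto using star_trans. Qed.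

Lemma same_nf_self : forall t, irreducible t -> same_nf t t.
Proof. intros. exists t; repeat split; auto; constructor. Qed.



Lemma env_Bcl : forall E, environment E -> Bcl E.
Proof. intros E H p q Hpq. destruct (H p q Hpq) as (? & ? & _). auto. Qed.

Lemma env_val : forall E p q, environment E -> E p q -> is_val p -> is_val q.
Proof. intros E p q H Hpq Hv. destruct (H p q Hpq) as (_ & _ & [[_ ?] | [[Hs _] _]]); auto. contradiction. Qed.

Lemma env_nval : forall E p q, environment E -> E p q -> ~ is_val p -> stuck q.
Proof. intros E p q H Hpq Hv. destruct (H p q Hpq) as (_ & _ & [[? _] | [_ ?]]); auto. contradiction. Qed.

Lemma env_nostep : forall E p q p', environment E -> E p q -> step p p' -> False.
Proof. intros E p q p' H Hpq Hs. destruct (H p q Hpq) as (_ & _ & [[Hv _] | [[_ Hi] _]]).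
  - eapply val_irred; eauto.
  - eapply Hi; eauto. Qed.

Lemma tclos_val : forall E p q, environment E -> tclos E p q -> is_val p -> is_val q.
Proof. intros E p q HE H Hv. inversion H; subst; try (destruct Hv; discriminate).
  - eapply env_val; eauto.
  - eexists; eauto. Qed.

Lemma crel_eval : forall E F F', environment E -> crel E F F' -> eval_ctx F -> eval_ctx F'.
Proof. intros E F F' HE H; induction H; simpl; intros; auto.
  destruct H1; split; eauto using tclos_val. Qed.

Lemma crel_pure : forall E F F', environment E -> crel E F F' -> pure_ctx F -> pure_ctx F'.
Proof. intros E F F' HE H; induction H; simpl; intros; auto.
  destruct H1; split; eauto using tclos_val. Qed.

Lemma crel_hat : forall E F F', environment E -> crel E F F' -> eval_ctx F -> cl_ctx 0 F -> cl_ctx 0 F' -> hat E F F'.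
Proof. intros E F F' HE H; induction H; simpl; intros.
  - constructor.
  - destruct H1, H2, H3. constructor; eauto using tclos_val. repeat split; auto.
  - destruct H2, H3. constructor; auto. repeat split; auto.
  - constructor; auto.
Qed.

Lemma pure_compose_inv : forall A B, pure_ctx (compose A B) -> pure_ctx A /\ pure_ctx B.
Proof. induction A; simpl; intros; try tauto.
  - destruct H. destruct (IHA B); auto.
  - destruct (IHA B); auto. Qed.

Lemma contr_step : forall r r', contr r r' -> step r r'.
Proof. intros. apply step_inv. exists Hole, r, r'. simpl. repeat split; auto. Qed.

Lemma walk_red : forall E, environment E -> forall F, eval_ctx F -> forall x b, tclos E (plug F x) b ->
  (exists x', step x x') -> exists F' x', b = plug F' x' /\ crel E F F' /\ tclos E x x'.
Proof. intros E HE F; induction F; simpl; intros HF x b H [x' Hx].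
  - exists Hole, b; simpl; repeat split; auto. constructor.
  - inversion H as [? ? Hb| | | | |? ? ? ? Hv Hr]; subst.
    + exfalso. eapply env_nostep; eauto. apply (step_ctx (ArgCtx v F)) in Hx; simpl in *; eauto.
    + destruct HF as [_ HF]. destruct (IHF HF x _ Hr) as (F' & x1 & -> & Hc & Ht); eauto.
      exists (ArgCtx t1 F'), x1; simpl; repeat split; auto. constructor; auto.
  - inversion H as [? ? Hb| | | | |? ? ? ? Hv Hr]; subst.
    + exfalso. eapply env_nostep; eauto. apply (step_ctx (FunCtx F t)) in Hx; simpl in *; eauto.
    + destruct (IHF HF x _ Hv) as (F' & x1 & -> & Hc & Ht); eauto.
      exists (FunCtx F' u1), x1; simpl; repeat split; auto. constructor; auto.
  - inversion H as [? ? Hb| | | |? ? Hr|]; subst.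
    + exfalso. eapply env_nostep; eauto. apply (step_ctx (ResetCtx F)) in Hx; simpl in *; eauto.
    + destruct (IHF HF x _ Hr) as (F' & x1 & -> & Hc & Ht); eauto.
      exists (ResetCtx F'), x1; simpl; repeat split; auto. constructor; auto.
Qed.

Lemma walk_shift : forall E, environment E -> forall E0, pure_ctx E0 -> forall s y,
  tclos E (plug E0 (Shift s)) y ->
  (exists E1 s', y = plug E1 (Shift s') /\ crel E E0 E1 /\ tclos E s s') \/
  (exists E0a E0b E1a q, E0 = compose E0a E0b /\ crel E E0a E1a /\ E (plug E0b (Shift s)) q /\ y = plug E1a q).
Proof. intros E HE E0; induction E0; simpl; intros HE0 s y H.
  - inversion H as [? ? Hb| | |? ? Hr| |]; subst.
    + right. exists Hole, Hole, Hole, y; simpl; repeat split; auto. constructor.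
    + left. exists Hole, t1; simpl; repeat split; auto. constructor.
  - inversion H as [? ? Hb| | | | |? ? ? ? Hv Hr]; subst.
    + right. exists Hole, (ArgCtx v E0), Hole, y; simpl; repeat split; auto. constructor.
    + destruct HE0 as [_ HE0]. destruct (IHE0 HE0 s _ Hr) as [(E1 & s' & -> & H6 & H7) | (E0a & E0b & E1a & q & -> & H6 & H7 & ->)].
      * left. exists (ArgCtx t1 E1), s'; simpl; repeat split; auto. constructor; auto.
      * right. exists (ArgCtx v E0a), E0b, (ArgCtx t1 E1a), q; simpl; repeat split; auto. constructor; auto.
  - inversion H as [? ? Hb| | | | |? ? ? ? Hv Hr]; subst.
    + right. exists Hole, (FunCtx E0 t), Hole, y; simpl; repeat split; auto. constructor.
    + destruct (IHE0 HE0 s _ Hv) as [(E1 & s' & -> & H6 & H7) | (E0a & E0b & E1a & q & -> & H6 & H7 & ->)].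
      * left. exists (FunCtx E1 u1), s'; simpl; repeat split; auto. constructor; auto.
      * right. exists (FunCtx E0a t), E0b, (FunCtx E1a u1), q; simpl; repeat split; auto. constructor; auto.
  - contradiction.
Qed.



Section Env.
Variable X : envrel.
Hypothesis HX1 : is_envrel X.
Hypothesis HX2 : env_bisim X.

Definition S1 n := forall E a b t, X_env X E -> tclos E a b -> closed a -> starn n a t -> irreducible t -> same_nf b t.
Definition S2 n := forall E F0 F1 t0 t1 t, X_trip X E t0 t1 -> crel E F0 F1 -> eval_ctx F0 ->
  closed (plug F0 t0) -> starn n (plug F0 t0) t -> irreducible t -> same_nf (plug F1 t1) t.

Lemma rel_add_incl : forall E a b p q, E p q -> rel_add E a b p q.
Proof. unfold rel_add; auto. Qed.

Lemma S2_of : forall n, S1 n -> (forall m, m < n -> S2 m) -> S2 n.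
Proof. intros n H1 IH E F0 F1 t0 t1 t Ht Hc HF Hcl Hn Hi.
  destruct HX1 as [HXe HXt]. destruct (HXt _ _ _ Ht) as (HE & Hc0 & Hc1).
  pose proof (crel_eval _ _ _ HE Hc HF) as HF1.
  destruct (proj1 HX2 _ _ _ Ht) as (Ha & Hb & Hs & _).
  destruct (progress t0 Hc0) as [Hv | [[t0' Hst] | (E0 & s & HE0 & Heq)]].
  - destruct (Hb Hv) as (v1 & Hs1 & Hv1 & Henv).
    apply same_nf_star with (plug F1 v1). apply star_ctx; auto.
    apply (H1 (rel_add E t0 v1) (plug F0 t0) (plug F1 v1) t); auto.
    apply crel_plug. eapply crel_mono; [|eauto]. apply rel_add_incl.
    apply tc_base. right; auto.
  - destruct (starn_det _ _ _ _ (step_ctx F0 _ _ HF Hst) Hn Hi) as (m & -> & Hm).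
    destruct (Ha _ Hst) as (t1' & Hs1 & Ht').
    apply same_nf_star with (plug F1 t1'). apply star_ctx; auto.
    apply (IH m ltac:(lia) E F0 F1 t0' t1' t); auto. eapply step_closed; [apply step_ctx; eauto|auto].
  - assert (Hst : stuck t0) by (subst; apply shape_stuck; auto).
    destruct (Hs Hst) as (v1 & Hs1 & Hv1 & Henv).
    apply same_nf_star with (plug F1 v1). apply star_ctx; auto.
    apply (H1 (rel_add E t0 v1) (plug F0 t0) (plug F1 v1) t); auto.
    apply crel_plug. eapply crel_mono; [|eauto]. apply rel_add_incl.
    apply tc_base. right; auto.
Qed.

Lemma closed_plug0 : forall F x, closed (plug F x) -> cl_ctx 0 F /\ closed x.
Proof. intros. apply closed_plug; auto. Qed.

Lemma S1_of : forall n, (forall m, m < n -> S2 m /\ S1 m) -> S1 n.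
Proof. intros n IH E a b t HXE Hab Hca Hn Hi.
  destruct HX1 as [HXe HXt]. pose proof (HXe _ HXE) as HE. pose proof (env_Bcl _ HE) as HB.
  assert (Hcb : closed b) by (apply (proj1 (tclos_closed E HB a b Hab 0)); exact Hca).
  destruct (proj2 HX2 E HXE) as [H2a H2b].
  destruct Hn as [a | n a a1 t Hs Hn].
  -
    destruct (progress a Hca) as [Hv | [[a' Hs] | (E0 & s & HE0 & ->)]].
    + assert (Hvb : is_val b) by (eapply tclos_val; eauto).
      exists b; repeat split; auto. constructor. apply val_irred; auto.
    + exfalso; eapply Hi; eauto.
    + assert (Hsb : stuck b).
      { destruct (walk_shift E HE E0 HE0 s b Hab) as [(E1 & s' & -> & HE1 & _) | (E0a & E0b & E1a & q & -> & HE1 & Hq & ->)].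
        - apply shape_stuck. eapply crel_pure; eauto.
        - assert (Hqs : stuck q). { eapply env_nval; eauto. apply pure_shift_not_val.
            apply (pure_compose_inv E0a E0b); auto. }
          destruct (stuck_shape q) as (E1b & s1 & HE1b & ->); auto.
          { destruct (HE _ _ Hq) as (_ & ? & _); auto. }
          rewrite <- plug_compose. apply shape_stuck. apply pure_compose; auto.
          eapply crel_pure; eauto. apply (pure_compose_inv E0a E0b); auto. }
      exists b; repeat split; auto. constructor. apply Hsb.
      intros Hv. exfalso. eapply pure_shift_not_val; eauto.
      intros Hv. exfalso. apply Hsb; auto.
  - destruct (IH n ltac:(lia)) as [IH2 IH1].
    pose proof (step_closed _ _ Hs Hca) as Hca1.
    apply step_inv in Hs. destruct Hs as (F & r & r' & HF & Hcr & -> & ->).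
    destruct (walk_red E HE F HF r b Hab) as (F' & x' & -> & HFF & Hrx).
    { exists r'. apply contr_step; auto. }
    pose proof (crel_eval _ _ _ HE HFF HF) as HF'.
    destruct (closed_plug0 _ _ Hca) as [HclF Hclr].
    destruct (closed_plug0 _ _ Hcb) as [HclF' Hclx].
    destruct Hcr as [s w Hw | E0 s HE0 | v Hv].
    +
      inversion Hrx as [? ? Hb| | | | |? y ? z Hy Hz]; subst.
      { exfalso. eapply env_nostep; eauto. apply contr_step; constructor; auto. }
      assert (Hvz : is_val z) by (eapply tclos_val; eauto).
      destruct Hclr as [_ Hclw]. destruct Hclx as [_ Hclz].
      inversion Hy as [? ? Hb| | | | |]; subst.
      * destruct (env_val _ _ _ HE Hb) as [s' ->]. eexists; eauto.
        apply same_nf_star with (plug F' (subst0 z s')).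
        { apply star1. apply step_beta; auto. }
        eapply (IH2 E F F'); eauto. apply H2a; auto. repeat split; auto.
      * apply same_nf_star with (plug F' (subst0 z t1)).
        { apply star1. apply step_beta; auto. }
        apply (IH1 E (plug F (subst0 w s)) (plug F' (subst0 z t1)) t); auto. apply crel_plug; auto. apply tclos_subst; auto.
    +
      inversion Hrx as [? ? Hb| | | |? y Hy|]; subst.
      { exfalso. eapply env_nostep; eauto. apply contr_step; constructor; auto. }
      simpl in Hclr, Hclx.
      destruct (walk_shift E HE E0 HE0 s y Hy) as [(E1 & s' & -> & HE1 & Hss) | (E0a & E0b & E1a & q & -> & HE1 & Hq & ->)].
      * apply same_nf_star with (plug F' (Reset (subst0 (capture E1) s'))).
        { apply star1. apply step_shift; auto. eapply crel_pure; eauto. }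
        apply (IH1 E (plug F (Reset (subst0 (capture E0) s))) (plug F' (Reset (subst0 (capture E1) s'))) t); auto. apply crel_plug; auto. tcs. apply tclos_subst; auto.
        unfold capture. tcs. tcs. apply crel_plug. apply crel_lift; auto. tcs.
      * destruct (pure_compose_inv E0a E0b HE0) as [HE0a HE0b].
        assert (Hqs : stuck q). { eapply env_nval; eauto. apply pure_shift_not_val; auto. }
        destruct (stuck_shape q) as (E1b & s1 & HE1b & ->); auto.
        { destruct (HE _ _ Hq) as (_ & ? & _); auto. }
        pose proof (crel_pure _ _ _ HE HE1 HE0a) as HE1a.
        apply same_nf_star with (plug F' (Reset (subst0 (capture (compose E1a E1b)) s1))).
        { apply star1. rewrite <- plug_compose. apply step_shift; auto. apply pure_compose; auto. }
        rewrite !capture_compose.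
        apply (IH2 E F F' (Reset (subst0 (Lam (Reset (plug (lift_ectx 0 E0a) (plug (lift_ectx 0 E0b) (Var 0))))) s)) _ t); auto.
        { apply H2b; auto. apply crel_hat; auto. apply pure_eval; auto.
          apply closed_plug in Hclr. destruct Hclr as [Hcc _]. apply cl_ctx_compose in Hcc. tauto.
          apply closed_plug in Hclx. tauto. }
        { rewrite <- capture_compose. auto. }
        { rewrite <- capture_compose. auto. }
    +
      inversion Hrx as [? ? Hb| | | |? z Hz|]; subst.
      { exfalso. eapply env_nostep; eauto. apply contr_step; constructor; auto. }
      apply same_nf_star with (plug F' z).
      { apply star1. apply step_reset; auto. eapply tclos_val; eauto. }
      apply (IH1 E (plug F v) (plug F' z) t); auto. apply crel_plug; auto.
Qed.

Lemma S_all : forall n, S1 n /\ S2 n.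
Proof. intros n. induction n as [n IH] using lt_wf_ind.
  assert (H1 : S1 n) by (apply S1_of; intros m Hm; destruct (IH m Hm); auto).
  split; auto. apply S2_of; auto. intros; apply IH; auto. Qed.

Lemma trip_sim : forall E F0 F1 t0 t1 t, X_trip X E t0 t1 -> crel E F0 F1 -> eval_ctx F0 ->
  closed (plug F0 t0) -> star (plug F0 t0) t -> irreducible t -> same_nf (plug F1 t1) t.
Proof. intros. destruct (star_starn _ _ H3) as [n Hn]. eapply (proj2 (S_all n)); eauto. Qed.

End Env.



Definition flipX (X : envrel) : envrel :=
  EnvRel (fun E => exists E0, X_env X E0 /\ forall a b, E a b <-> E0 b a)
         (fun E t0 t1 => exists E0, X_trip X E0 t1 t0 /\ forall a b, E a b <-> E0 b a).

Lemma tclos_flip : forall (E E0 : rel), (forall a b, E a b -> E0 b a) -> forall x y, tclos E x y -> tclos E0 y x.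
Proof. intros E E0 HE x y H; induction H; [apply tc_base; auto|tcs..]; auto. Qed.

Lemma tilde_flip : forall (E E0 : rel), (forall a b, E a b -> E0 b a) -> forall x y, tilde E x y -> tilde E0 y x.
Proof. intros E E0 HE x y (H1 & H2 & H3). repeat split; auto. eapply tclos_flip; eauto. Qed.

Lemma hat_flip : forall (E E0 : rel), (forall a b, E a b -> E0 b a) -> forall F F', hat E F F' -> hat E0 F' F.
Proof. intros E E0 HE F F' H; induction H; constructor; eauto using tilde_flip. Qed.

Lemma env_flip : forall (E E0 : rel), (forall a b, E a b <-> E0 b a) -> environment E0 -> environment E.
Proof. intros E E0 HE H a b Hab. apply HE in Hab. destruct (H _ _ Hab) as (? & ? & [[? ?]|[? ?]]); tauto. Qed.

Lemma rel_add_flip : forall (E E0 : rel) a b, (forall x y, E x y <-> E0 y x) ->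
  forall x y, rel_add E a b x y <-> rel_add E0 b a y x.
Proof. intros. unfold rel_add. rewrite H. tauto. Qed.

Lemma flip_envrel : forall X, is_envrel X -> is_envrel (flipX X).
Proof. intros X [H1 H2]. split; simpl.
  - intros E (E0 & HE0 & Hiff). apply (env_flip E E0 Hiff); auto.
  - intros E t0 t1 (E0 & HE0 & Hiff). destruct (H2 _ _ _ HE0) as (He & Hc1 & Hc2). split; [|split]; auto.
    apply (env_flip E E0 Hiff); auto.
Qed.

Lemma flip_bisim : forall X, env_bisim X -> env_bisim (flipX X).
Proof. intros X [H1 H2]. split; simpl.
  - intros E t0 t1 (E0 & HT & Hiff). destruct (H1 _ _ _ HT) as (Ha & Hb & Hc & Hd & He & Hf).
    repeat split.
    + intros t0' Hs. destruct (Hd _ Hs) as (t1' & ? & ?). exists t1'; split; auto. exists E0; auto.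
    + intros Hv. destruct (He Hv) as (v0 & ? & ? & ?). exists v0; split; [|split]; auto.
      exists (rel_add E0 v0 t0); split; auto. apply rel_add_flip; auto.
    + intros Hv. destruct (Hf Hv) as (v0 & ? & ? & ?). exists v0; split; [|split]; auto.
      exists (rel_add E0 v0 t0); split; auto. apply rel_add_flip; auto.
    + intros t0' Hs. destruct (Ha _ Hs) as (t1' & ? & ?). exists t1'; split; auto. exists E0; auto.
    + intros Hv. destruct (Hb Hv) as (v0 & ? & ? & ?). exists v0; split; [|split]; auto.
      exists (rel_add E0 t1 v0); split; auto. intros; rewrite rel_add_flip; eauto. reflexivity.
    + intros Hv. destruct (Hc Hv) as (v0 & ? & ? & ?). exists v0; split; [|split]; auto.
      exists (rel_add E0 t1 v0); split; auto. intros; rewrite rel_add_flip; eauto. reflexivity.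
  - intros E (E0 & HE0 & Hiff). destruct (H2 _ HE0) as [Ha Hb]. split.
    + intros t0 t1 v0 v1 HE Hv0 Hv1 Ht. exists E0; split; auto. apply Ha; auto.
      apply Hiff; auto. eapply tilde_flip; eauto. intros; apply Hiff; auto.
    + intros E1 E2 t0 t1 E1' E2' P1 P2 HE P1' P2' Hh. exists E0; split; auto.
      apply Hb; auto. apply Hiff; auto. eapply hat_flip; eauto. intros; apply Hiff; auto.
Qed.



Section T0.
Variables t0 t1 : term.
Hypothesis Hc0 : closed t0.
Hypothesis Hc1 : closed t1.
Definition B0 : rel := fun p q => p = t0 /\ q = t1.

Lemma B0cl : Bcl B0.
Proof. intros p q [-> ->]; auto. Qed.

Lemma cn_compose : forall k1 A A', cn B0 k1 A A' -> forall k2 B B', cn B0 k2 B B' ->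
  cn B0 (k1 + k2) (compose A B) (compose A' B').
Proof. intros k1 A A' H; induction H; simpl; intros; auto.
  - rewrite <- Nat.add_assoc. constructor; auto.
  - replace (k1 + k2 + k0) with ((k1 + k0) + k2) by lia. constructor; auto.
  - constructor; auto.
Qed.

Lemma cn_pure : forall k F F', cn B0 k F F' -> pure_ctx F -> eval_ctx F' -> pure_ctx F'.
Proof. intros k F F' H; induction H; simpl; intros; tauto. Qed.

Definition W1 F x b k := exists F' x' k1 k2, b = plug F' x' /\ cn B0 k1 F F' /\ eval_ctx F' /\ tcn B0 k2 x x' /\ k = k1 + k2.
Definition W2 a b k := exists G0 G1 k', a = plug G0 t0 /\ b = plug G1 t1 /\ cn B0 k' G0 G1 /\ eval_ctx G0 /\ eval_ctx G1 /\ k = S k'.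

Lemma W2_ext : forall F F' k1 a b k, cn B0 k1 F F' -> eval_ctx F -> eval_ctx F' -> W2 a b k ->
  W2 (plug F a) (plug F' b) (k1 + k).
Proof. intros F F' k1 a b k HF H1 H2 (G0 & G1 & k' & -> & -> & Hc & HG0 & HG1 & ->).
  exists (compose F G0), (compose F' G1), (k1 + k'). rewrite !plug_compose. repeat split; auto using eval_compose; try (apply cn_compose; auto); lia. Qed.

Lemma W2_base : forall a b, B0 a b -> W2 a b 1.
Proof. intros a b [-> ->]. exists Hole, Hole, 0; simpl; repeat split; auto. constructor. Qed.

Lemma walk0 : forall F, eval_ctx F -> forall x b k, tcn B0 k (plug F x) b -> W1 F x b k \/ W2 (plug F x) b k.
Proof. induction F; simpl; intros HF x b k H.
  - left. exists Hole, b, 0, k; simpl; repeat split; auto. constructor.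
  - inversion H as [? ? Hb| | | | |k1 k2 ? v' ? u' Hv Hr]; subst.
    + right; apply W2_base; auto.
    + destruct HF as [[s ->] HF]. inversion Hv as [? ? Hb| |? ? s' Hs| | |]; subst.
      * destruct Hb as [Hb1 Hb2]. right. exists (FunCtx Hole (plug F x)), (FunCtx Hole u'), (0 + k2); simpl; repeat split; auto;
        try congruence. apply (cn_fun B0 0 k2); [constructor|auto].
      * destruct (IHF HF x _ _ Hr) as [(F' & x' & j1 & j2 & -> & Hc & HF' & Hx & ->) | HW].
        { left. exists (ArgCtx (Lam s') F'), x', (k1 + j1), j2; simpl; repeat split; auto.
          constructor; auto. eexists; eauto. lia. }
        { right. replace (k1 + k2) with (k1 + 0 + k2) by lia.
          apply (W2_ext (ArgCtx (Lam s) Hole) (ArgCtx (Lam s') Hole) (k1 + 0)) in HW; simpl in *; auto.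
          constructor; auto. constructor. split; auto. eexists; eauto. split; auto. eexists; eauto. }
  - inversion H as [? ? Hb| | | | |k1 k2 ? v' ? u' Hv Hr]; subst.
    + right; apply W2_base; auto.
    + destruct (IHF HF x _ _ Hv) as [(F' & x' & j1 & j2 & -> & Hc & HF' & Hx & ->) | HW].
      * left. exists (FunCtx F' u'), x', (j1 + k2), j2; simpl; repeat split; auto.
        constructor; auto. lia.
      * right. replace (k1 + k2) with (0 + k2 + k1) by lia.
        apply (W2_ext (FunCtx Hole t) (FunCtx Hole u') (0 + k2)) in HW; simpl in *; auto.
        apply (cn_fun B0 0 k2); [constructor|auto].
  - inversion H as [? ? Hb| | | |? ? ? Hr|]; subst.
    + right; apply W2_base; auto.
    + destruct (IHF HF x _ _ Hr) as [(F' & x' & j1 & j2 & -> & Hc & HF' & Hx & ->) | HW].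
      * left. exists (ResetCtx F'), x', j1, j2; simpl; repeat split; auto. constructor; auto.
      * right. apply (W2_ext (ResetCtx Hole) (ResetCtx Hole) 0) in HW; simpl in *; auto.
        constructor; constructor.
Qed.

Hypothesis CB : forall G t', eval_ctx G -> cl_ctx 0 G -> star (plug G t0) t' -> irreducible t' -> same_nf (plug G t1) t'.

Definition Q n k := forall a b t, tcn B0 k a b -> closed a -> starn n a t -> irreducible t -> same_nf b t.

Lemma handler : forall n k a b t, W2 a b k -> (forall k', k' < k -> Q n k') -> closed a -> closed b ->
  starn n a t -> irreducible t -> same_nf b t.
Proof. intros n k a b t (G0 & G1 & k' & -> & -> & Hc & HG0 & HG1 & ->) IH Ha Hb Hn Hi.
  assert (Hac : tcn B0 k' (plug G0 t0) (plug G1 t0)).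
  { rewrite <- (Nat.add_0_r k'). apply cn_plug; auto. apply tcn_refl. }
  destruct (IH k' ltac:(lia) _ _ _ Hac Ha Hn Hi) as (t2 & Hs2 & Hi2 & Hv2).
  destruct (CB G1 t2 HG1) as (t3 & Hs3 & Hi3 & Hv3); auto.
  { apply closed_plug in Hb; tauto. }
  exists t3; split; [|split]; auto. rewrite Hv2; auto. Qed.

Lemma structural : forall n b b1 a1 t, star b b1 -> tclos B0 a1 b1 -> closed a1 -> starn n a1 t -> irreducible t ->
  (forall k, Q n k) -> same_nf b t.
Proof. intros. apply same_nf_star with b1; auto. destruct (tclos_tcn _ _ _ H0) as [k Hk]. eapply H4; eauto. Qed.

Lemma tcn_closed : forall k a b, tcn B0 k a b -> closed a -> closed b.
Proof. intros. apply (proj1 (tclos_closed B0 B0cl a b (tcn_tclos _ _ _ _ H) 0)); auto. Qed.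

Lemma Q_all : forall n k, Q n k.
Proof. intros n. induction n as [n IHn] using lt_wf_ind. intros k. induction k as [k IHk] using lt_wf_ind.
  intros a b t Hab Ha Hn Hi. pose proof (tcn_closed _ _ _ Hab Ha) as Hb.
  destruct Hn as [a | n a a1 t Hs Hn].
  - destruct (progress a Ha) as [[s ->] | [[a' Hs] | (E0 & s & HE0 & ->)]].
    + inversion Hab as [? ? Hbb| |? ? s' Hs'| | |]; subst.
      * apply (handler 0 1 (Lam s) b (Lam s)); auto. apply W2_base; auto. constructor.
      * exists (Lam s'); repeat split; auto. constructor. apply val_irred; eexists; eauto.
        intros; eexists; eauto. intros; eexists; eauto.
    + exfalso; eapply Hi; eauto.
    + destruct (walk0 E0 (pure_eval _ HE0) (Shift s) b k Hab) as [(E1 & x' & k1 & k2 & -> & Hc & HE1 & Hx & ->) | HW].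
      * inversion Hx as [? ? Hbb| | |? ? s' Hs'| |]; subst.
        { apply (handler 0 (k1 + 1) (plug E0 (Shift s)) (plug E1 x') (plug E0 (Shift s))); auto.
          apply W2_ext; auto. apply pure_eval; auto. apply W2_base; auto. constructor. }
        { assert (HP1 : pure_ctx E1) by (eapply cn_pure; eauto).
          exists (plug E1 (Shift s')); split; [constructor|split]. apply shift_irred; auto.
          split; intro HH; exfalso. apply (pure_shift_not_val E0 s HE0 HH). apply (pure_shift_not_val E1 s' HP1 HH). }
      * apply (handler 0 k (plug E0 (Shift s)) b (plug E0 (Shift s))); auto. constructor.
  - assert (IHm : forall k, Q n k) by (intros; apply IHn; lia).
    pose proof (step_closed _ _ Hs Ha) as Ha1.
    apply step_inv in Hs. destruct Hs as (F & r & r' & HF & Hcr & -> & ->).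
    destruct (walk0 F HF r b k Hab) as [(F' & x' & k1 & k2 & -> & Hc & HF' & Hx & ->) | HW].
    2:{ apply (handler (S n) k (plug F r) b t); auto. econstructor; eauto. apply step_inv. exists F, r, r'; repeat split; auto. }
    assert (HW2 : forall j, W2 r x' j -> k2 = j -> same_nf (plug F' x') t).
    { intros j HW Hj. apply (handler (S n) (k1 + j) (plug F r) (plug F' x') t).
      - apply (W2_ext F F' k1); eauto.
      - intros k' Hk'. apply IHk. subst; lia.
      - auto.
      - auto.
      - econstructor; eauto. apply step_inv. exists F, r, r'; repeat split; auto.
      - auto. }
    destruct Hcr as [s w Hw | E0 s HE0 | v Hv].
    + inversion Hx as [? ? Hbb| | | | |j1 j2 ? y ? z Hy Hz]; subst.
      { apply (HW2 1); auto. apply W2_base; auto. }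
      inversion Hy as [? ? Hbb| |? ? s' Hs'| | |]; subst.
      { apply (HW2 (0 + j2 + 1)); [|lia].
        apply (W2_ext (FunCtx Hole w) (FunCtx Hole z) (0 + j2)); simpl; auto.
        apply (cn_fun B0 0 j2); [constructor|auto]. apply W2_base; auto. }
      destruct Hw as [u ->].
      inversion Hz as [? ? Hbb| |? ? u' Hu'| | |]; subst.
      { apply (HW2 (j1 + 0 + 1)); [|lia].
        apply (W2_ext (ArgCtx (Lam s) Hole) (ArgCtx (Lam s') Hole) (j1 + 0)); simpl; auto.
        constructor; auto; constructor. split; auto; eexists; eauto. split; auto; eexists; eauto.
        apply W2_base; auto. }
      apply (structural n _ (plug F' (subst0 (Lam u') s')) (plug F (subst0 (Lam u) s)) t); auto.
      { apply star1. apply step_beta; auto. eexists; eauto. }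
      apply crel_plug. eapply cn_crel; eauto. apply tclos_subst. apply B0cl.
      eapply tcn_tclos; eauto. apply tc_lam. eapply tcn_tclos; eauto.
    + inversion Hx as [? ? Hbb| | | |? ? y Hy|]; subst.
      { apply (HW2 1); auto. apply W2_base; auto. }
      destruct (walk0 E0 (pure_eval _ HE0) (Shift s) y k2 Hy) as [(E1 & x'' & j1 & j2 & -> & Hc2 & HE1 & Hx2 & ->) | HW].
      * inversion Hx2 as [? ? Hbb| | |? ? s' Hs'| |]; subst.
        { apply (HW2 (0 + (j1 + 1))); [|lia].
          apply (W2_ext (ResetCtx Hole) (ResetCtx Hole) 0); simpl; auto. constructor; constructor.
          apply W2_ext; auto. apply pure_eval; auto. apply W2_base; auto. }
        assert (HP1 : pure_ctx E1) by (eapply cn_pure; eauto).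
        apply (structural n _ (plug F' (Reset (subst0 (capture E1) s'))) (plug F (Reset (subst0 (capture E0) s))) t); auto.
        { apply star1. apply step_shift; auto. }
        apply crel_plug. eapply cn_crel; eauto. tcs. apply tclos_subst. apply B0cl.
        eapply tcn_tclos; eauto. unfold capture. tcs. tcs. apply crel_plug. apply crel_lift. apply B0cl.
        eapply cn_crel; eauto. tcs.
      * apply (HW2 (0 + k2)); auto.
        apply (W2_ext (ResetCtx Hole) (ResetCtx Hole) 0); simpl; auto. constructor; constructor.
    + inversion Hx as [? ? Hbb| | | |? ? z Hz|]; subst.
      { apply (HW2 1); auto. apply W2_base; auto. }
      destruct Hv as [u ->].
      inversion Hz as [? ? Hbb| |? ? u' Hu'| | |]; subst.
      { apply (HW2 (0 + 1)); auto.
        apply (W2_ext (ResetCtx Hole) (ResetCtx Hole) 0); simpl; auto. constructor; constructor.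
        apply W2_base; auto. }
      apply (structural n _ (plug F' (Lam u')) (plug F (Lam u)) t); auto.
      { apply star1. apply step_reset; auto. eexists; eauto. }
      apply crel_plug. eapply cn_crel; eauto. apply tc_lam. eapply tcn_tclos; eauto.
Qed.

End T0.


Lemma cfill_tcn : forall t0 t1 C, exists k, tcn (B0 t0 t1) k (cfill C t0) (cfill C t1).
Proof. intros t0 t1 C; induction C; simpl.
  - exists 1. apply tn_base. split; auto.
  - destruct IHC as [k Hk]. exists k. apply tn_lam; auto.
  - destruct IHC as [k Hk]. exists (k + 0). apply tn_app; auto. apply tcn_refl.
  - destruct IHC as [k Hk]. exists (0 + k). apply tn_app; auto. apply tcn_refl.
  - destruct IHC as [k Hk]. exists k. apply tn_shift; auto.
  - destruct IHC as [k Hk]. exists k. apply tn_reset; auto.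
Qed.

Lemma one_dir : forall t0 t1, closed t0 -> closed t1 ->
  (forall G t', eval_ctx G -> cl_ctx 0 G -> star (plug G t0) t' -> irreducible t' -> same_nf (plug G t1) t') ->
  forall C, closed (cfill C t0) ->
  ((exists v, evals_to (cfill C t0) v /\ is_val v) -> (exists v, evals_to (cfill C t1) v /\ is_val v)) /\
  ((exists s, evals_to (cfill C t0) s /\ stuck s) -> (exists s, evals_to (cfill C t1) s /\ stuck s)).
Proof. intros t0 t1 H0 H1 CB C HC. destruct (cfill_tcn t0 t1 C) as [k Hk].
  split.
  - intros (v & [Hs Hi] & Hv). destruct (star_starn _ _ Hs) as [n Hn].
    destruct (Q_all t0 t1 H0 H1 CB n k _ _ _ Hk HC Hn Hi) as (v' & Hs' & Hi' & Hvv).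
    exists v'; repeat split; auto. apply Hvv; auto.
  - intros (s & [Hs Hi] & [Hv _]). destruct (star_starn _ _ Hs) as [n Hn].
    destruct (Q_all t0 t1 H0 H1 CB n k _ _ _ Hk HC Hn Hi) as (v' & Hs' & Hi' & Hvv).
    exists v'; repeat split; auto. intros Hv'; apply Hv, Hvv; auto.
Qed.

Theorem corollary1 (t0 t1 : term) :
  closed t0 -> closed t1 -> bisimilar empty_env t0 t1 -> ctx_equiv t0 t1.
Proof.
  intros H0 H1 (X & HX1 & HX2 & HT).
  assert (CB : forall G t', eval_ctx G -> cl_ctx 0 G -> star (plug G t0) t' -> irreducible t' -> same_nf (plug G t1) t').
  { intros G t' HG HcG Hs Hi. apply (trip_sim X HX1 HX2 empty_env G G t0 t1 t'); auto.
    apply crel_refl. apply closed_plug; auto. }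
  assert (CB' : forall G t', eval_ctx G -> cl_ctx 0 G -> star (plug G t1) t' -> irreducible t' -> same_nf (plug G t0) t').
  { intros G t' HG HcG Hs Hi. apply (trip_sim (flipX X) (flip_envrel X HX1) (flip_bisim X HX2) empty_env G G t1 t0 t'); auto.
    - simpl. exists empty_env. split; auto. unfold empty_env; tauto.
    - apply crel_refl.
    - apply closed_plug; auto. }
  intros C HC0 HC1.
  destruct (one_dir t0 t1 H0 H1 CB C HC0) as [A1 A2].
  destruct (one_dir t1 t0 H1 H0 CB' C HC1) as [B1 B2].
  split; split; auto.
Qed.
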